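(* Let $V$ be a reflexive Banach space, $X$ a Hilbert space, $C\subset V$, $K\colon C\to 2^C$ with nonempty closed convex values, $A\colon V\to V^*$, $f\in V^*$, $\varphi\colon V\to\mathbb{R}$ convex, $M\colon V\to X$ linear and bounded with adjoint $M^*$, and $j\colon X\to\mathbb{R}$ locally Lipschitz. Then $u\in C$ satisfies $u\in K(u)$ and $$\langle Au-f,z-u\rangle+\varphi(z)-\varphi(u)+j^0(Mu;Mz-Mu)\ge0\quad\forall z\in K(u)$$ if and only if $u\in C$, $u\in K(u)$, and there exists $w\in\partial j(Mu)$ such that $$\langle Au-f,z-u\rangle+\varphi(z)-\varphi(u)+\langle M^*w,z-u\rangle\ge0\quad\forall z\in K(u).$$
   Context: $j^0(x;v)=\limsup_{y\to x,\lambda\downarrow0}\frac{j(y+\lambda v)-j(y)}{\lambda}$ is the Clarke generalized directional derivative, and $\partial j(x)=\{\xi\in X:\langle\xi,v\rangle_X\le j^0(x;v)\ \forall v\in X\}$ is the Clarke subgradient. *)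

(* Defs.v *)
From HB Require Import structures.
From mathcomp Require Import all_boot all_order all_algebra.
From mathcomp Require Import all_classical all_reals all_analysis.
Set Implicit Arguments. Unset Strict Implicit. Unset Printing Implicit Defensive.
Import Order.TTheory GRing.Theory Num.Theory.
Import numFieldNormedType.Exports.
Local Open Scope classical_set_scope.
Local Open Scope ring_scope.

Definition is_dual {R : realType} {V : normedModType R} (f : V -> R) : Prop :=
  (forall (a : R) (x y : V), f (a *: x + y) = a * f x + f y) /\ continuous f.

Definition dual_norm {R : realType} {V : normedModType R} (f : V -> R) : R :=
  sup [set `|f v| | v in [set v : V | `|v| <= 1]].

(* Reflexivity: every bounded linear functional on V^* is evaluation at
   some point of V (the canonical embedding V -> V^** is onto). *)
Definition reflexive_space (R : realType) (V : normedModType R) : Prop :=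
  forall Phi : (V -> R) -> R,
    (forall (a : R) (f g : V -> R), is_dual f -> is_dual g ->
       Phi (fun v => a * f v + g v) = a * Phi f + Phi g) ->
    (exists c : R, forall f, is_dual f -> `|Phi f| <= c * dual_norm f) ->
    exists v : V, forall f, is_dual f -> Phi f = f v.

Definition hilbert_inner {R : realType} {X : normedModType R}
  (inner : X -> X -> R) : Prop :=
  (forall x y, inner x y = inner y x) /\
  (forall (a : R) x y z, inner (a *: x + y) z = a * inner x z + inner y z) /\
  (forall x, inner x x = `|x| ^+ 2).

Definition bounded_linear {R : realType} {V X : normedModType R} (M : V -> X)
  : Prop :=
  (forall (a : R) (x y : V), M (a *: x + y) = a *: M x + M y) /\ continuous M.

(* Adjoint M^* : X -> V^* (X identified with X^* via Riesz):
   <M^* w, v> = (w, M v)_X. *)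
Definition adjoint {R : realType} {V X : normedModType R}
  (inner : X -> X -> R) (M : V -> X) (w : X) : V -> R :=
  fun v => inner w (M v).

Definition locally_lipschitz {R : realType} {X : normedModType R} (j : X -> R)
  : Prop :=
  forall x : X, exists r : R, exists L : R, 0 < r /\
    forall y z, `|y - x| < r -> `|z - x| < r -> `|j y - j z| <= L * `|y - z|.

(* Clarke generalized directional derivative
   j^0(x; v) = limsup_{y -> x, lambda \downarrow 0} (j(y + lambda v) - j y)/lambda
             = inf_{delta > 0} sup { (j(y+lambda v) - j y)/lambda :
                                     |y - x| < delta, 0 < lambda < delta }. *)
Definition clarke_dd {R : realType} {X : normedModType R} (j : X -> R)
  (x v : X) : \bar R :=
  ereal_inf [set ereal_sup
      [set ((j (yl.1 + yl.2 *: v) - j yl.1) / yl.2)%:E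
         | yl in [set yl : X * R | `|yl.1 - x| < delta /\ 0 < yl.2 < delta]]
    | delta in [set d : R | 0 < d]].

Definition clarke_subdiff {R : realType} {X : normedModType R}
  (inner : X -> X -> R) (j : X -> R) (x xi : X) : Prop :=
  forall v : X, ((inner xi v)%:E <= clarke_dd j x v)%E.

(* Main.v *)
Require Import Defs.
From HB Require Import structures.
From mathcomp Require Import all_boot all_order all_algebra.
From mathcomp Require Import all_classical all_reals all_analysis.
From mathcomp Require Import ring lra zify.
Import Order.TTheory GRing.Theory Num.Theory.
Import numFieldNormedType.Exports.
Local Open Scope classical_set_scope.
Local Open Scope ring_scope.

Section Hilb.
Variables (R : realType) (X : completeNormedModType R) (inner : X -> X -> R).
Hypothesis hX : hilbert_inner inner.

Lemma innerDl x y z : inner (x + y) z = inner x z + inner y z.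
Proof. case: hX => _ [h _]; by have := h 1 x y z; rewrite scale1r mul1r. Qed.
Lemma inner0l z : inner 0 z = 0.
Proof. have := innerDl 0 0 z; rewrite addr0; lra. Qed.
Lemma innerZl a x z : inner (a *: x) z = a * inner x z.
Proof. case: hX => _ [h _]; by have := h a x 0 z; rewrite addr0 inner0l addr0. Qed.
Lemma innerNl x z : inner (- x) z = - inner x z.
Proof. by rewrite -scaleN1r innerZl mulN1r. Qed.
Lemma innerC x y : inner x y = inner y x.
Proof. by case: hX. Qed.
Lemma innerDr x y z : inner z (x + y) = inner z x + inner z y.
Proof. by rewrite innerC innerDl !(innerC z). Qed.
Lemma innerZr a x z : inner z (a *: x) = a * inner z x.
Proof. by rewrite innerC innerZl innerC. Qed.
Lemma innerNr x z : inner z (- x) = - inner z x.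
Proof. by rewrite innerC innerNl innerC. Qed.
Lemma innerxx x : inner x x = `|x| ^+ 2.
Proof. by case: hX => _ []. Qed.

Lemma subgrad_exists (p : X -> R) (L : R) :
  (forall x y, p (x + y) <= p x + p y) ->
  (forall c x, 0 < c -> p (c *: x) <= c * p x) ->
  (forall x, p x <= L * `|x|) ->
  (forall x, - (L * `|x|) <= p x) ->
  exists g : X, forall z, inner g z <= p z.
Proof.
move=> psub phom pup plo.
pose Psi x := p x + inner x x / 2.
have Psilb x : - (L ^+ 2 / 2) <= Psi x.
  rewrite /Psi innerxx; have := plo x; have := sqr_ge0 (`|x| - L); lra.
pose m0 := inf (range Psi).
have hlb : has_lbound (range Psi).
  by exists (- (L ^+ 2 / 2)) => _ [x _ <-]; apply: Psilb.
have hne : nonempty (range Psi) by exists (Psi 0), 0.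
have m0le y : m0 <= Psi y by apply: ge_inf => //; exists y.
have approx e : 0 < e -> exists x, Psi x < m0 + e.
  move=> e0; apply/not_existsP => /= H.
  have : m0 + e <= m0.
    apply: lb_le_inf => // _ [x _ <-]; by move: (H x) => /negP; rewrite -leNgt.
  lra.
have /choice [xs hxs] : forall n : nat, exists x, Psi x < m0 + (n.+1%:R)^-1.
  by move=> n; apply: approx; rewrite invr_gt0 ltr0n.
(* parallelogram estimate *)
have mid x y : `|x - y| ^+ 2 <= 4 * (Psi x - m0) + 4 * (Psi y - m0).
  have h1 := m0le (2^-1 *: x + 2^-1 *: y).
  have h2 : p (2^-1 *: x + 2^-1 *: y) <= 2^-1 * p x + 2^-1 * p y.
    apply: le_trans (psub _ _) _; apply: lerD; apply: phom; lra.
  move: h1; rewrite /Psi -!innerxx.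
  rewrite !(innerDl, innerDr, innerZl, innerZr, innerNl, innerNr).
  rewrite (innerC y x); lra.
have invmono (a b : nat) : (a <= b)%N -> (b.+1%:R)^-1 <= (a.+1%:R)^-1 :> R.
  move=> ab; rewrite lef_pV2 ?posrE ?ltr0n // ler_nat; lia.
have invsmall e : 0 < e -> exists N : nat, (N.+1%:R)^-1 < e :> R.
  move=> e0; exists (Num.bound (e^-1)).
  have hb := @archi_boundP R (e^-1) (ltW (eqbRL (invr_gt0 _) e0)).
  rewrite -[e]invrK ltf_pV2 ?posrE ?ltr0n ?invr_gt0 //.
  apply: (lt_trans hb); by rewrite !invrK ltr_nat ltnS leqnn.
have cxs : cauchy_ex (xs @ \oo).
  move=> e e0.
  have [N hN] := invsmall (e ^+ 2 / 8) ltac:(by rewrite divr_gt0 // exprn_gt0).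
  exists (xs N); exists N => // n /= hn.
  rewrite -ball_normE /ball_ /=.
  have := mid (xs N) (xs n).
  have h1 := hxs N; have h2 := hxs n; have h3 := invmono _ _ hn.
  move=> dd; have d0 := normr_ge0 (xs N - xs n).
  have : `|xs N - xs n| ^+ 2 < e ^+ 2. set D := `|xs N - xs n| ^+ 2 in dd *. set E := e ^+ 2 in hN *. set iN := N.+1%:R^-1 in hN h1 h3. set iM := n.+1%:R^-1 in h2 h3. lra.
  nra.
have cc : cauchy (xs @ \oo) by apply: cauchy_exP.
have [xst hxst] := iffLR (cvg_ex _) (proj1 (cauchy_cvgP _) cc).
have Pmin y : Psi xst <= Psi y.
  apply: (le_trans _ (m0le y)); apply/ler_addgt0Pr => e e0.
  set K := `|L| + `|xst| + 1.
  have K0 : 0 < K by rewrite /K; have := normr_ge0 L; have := normr_ge0 xst; lra.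
  pose del := Num.min 1 (e / 4 / K).
  have del0 : 0 < del by rewrite lt_min ltr01 /= !divr_gt0.
  have del1 : del <= 1 by rewrite ge_min lexx.
  have delK : del * K <= e / 4.
    by rewrite -ler_pdivlMr // ge_min lexx orbT.
  have [N hN] := invsmall (e/2) ltac:(by rewrite divr_gt0).
  have := (proj1 (cvgrPdist_lt _ _) hxst) del del0.
  move=> [M _ hM].
  have hd := hM (maxn M N) (leq_maxl _ _).
  have hx := hxs (maxn M N); have hi := invmono N (maxn M N) (leq_maxr _ _).
  move: hd hx hi hN; set xn := xs (maxn M N); set d := xst - xn => hd hx hi hN.
  have hsplit : xst = xn + d by rewrite /d addrC subrK.
  have hp : p xst <= p xn + L * `|d|.
    by rewrite {1}hsplit; apply: le_trans (psub _ _) _; rewrite lerD2l.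
  have hLd : L * `|d| <= `|L| * del.
    apply: le_trans (ler_norm _) _; rewrite normrM normr_id ler_wpM2l //.
    exact: ltW hd.
  have hn1 : `|xst| <= `|xn| + `|d| by rewrite {1}hsplit ler_normD.
  have hn2 : `|xn| <= `|xst| + `|d|.
    have -> : xn = xst - d by rewrite /d opprB addrC subrK.
    exact: ler_normB.
  have hdd : `|d| < del by [].
  have hd0 := normr_ge0 d; have hx0 := normr_ge0 xn; have hs0 := normr_ge0 xst.
  have hL0 := normr_ge0 L.
  rewrite /Psi !innerxx.
  move: hx; rewrite /Psi innerxx => hx.
  set iN := N.+1%:R^-1 in hN hi; set iM := (maxn M N).+1%:R^-1 in hi hx.
  have hq : `|xst| ^+ 2 - `|xn| ^+ 2 <= del * (2 * `|xst| + 1).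
    nra.
  have : del * (`|L| + `|xst| + 1) <= e / 4 by [].
  nra.
have opt z : 0 <= p z + inner xst z.
  have zz0 : 0 <= inner z z by rewrite innerxx sqr_ge0.
  have ht t : 0 < t -> 0 <= p z + inner xst z + t * inner z z / 2.
    move=> t0; have := Pmin (xst + t *: z); have := psub xst (t *: z).
    have := phom t z t0.
    rewrite /Psi !(innerDl, innerDr, innerZl, innerZr) (innerC z xst).
    move=> h1 h2 h3.
    have : 0 <= t * (p z + inner xst z + t * inner z z / 2) by lra.
    rewrite pmulr_rge0 //.
  apply/ler_addgt0Pr => e e0.
  have := ht (2 * e / (inner z z + 1)) ltac:(by rewrite divr_gt0 ?mulr_gt0 //; lra).
  have : 2 * e / (inner z z + 1) * inner z z / 2 <= e.
    have hq : inner z z / (inner z z + 1) <= 1 by rewrite ler_pdivrMr; lra.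
    have -> : 2 * e / (inner z z + 1) * inner z z / 2 = e * (inner z z / (inner z z + 1)).
      field; apply/negP => /eqP; lra.
    by rewrite ler_piMr // ltW.
  lra.
exists (- xst) => z; rewrite innerNl; have := opt z; lra.
Qed.
End Hilb.

Section Clarke.
Variables (R : realType) (X : normedModType R) (j : X -> R) (x0 : X).

Let Q v y l := (j (y + l *: v) - j y) / l.

Lemma cdd_up v d1 d2 (a : R) : 0 < d1 -> 0 < d2 ->
  (forall y l, `|y - x0| < d1 -> 0 < l < d2 -> Q v y l <= a) ->
  (clarke_dd j x0 v <= a%:E)%E.
Proof.
move=> d10 d20 H; rewrite /clarke_dd.
apply: ge_ereal_inf; exists (ereal_sup [set ((j (yl.1 + yl.2 *: v) - j yl.1) / yl.2)%:E
         | yl in [set yl : X * R | `|yl.1 - x0| < Num.min d1 d2 /\ 0 < yl.2 < Num.min d1 d2]]).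
  by exists (Num.min d1 d2) => //; rewrite /= lt_min d10 d20.
apply: ge_ereal_sup => _ [[y l] /= [hy /andP[l0 hl]] <-].
rewrite lee_fin; apply: H.
  by apply: lt_le_trans hy _; rewrite ge_min lexx.
by rewrite l0 /=; apply: lt_le_trans hl _; rewrite ge_min lexx orbT.
Qed.

Lemma cdd_approx v c e : clarke_dd j x0 v = c%:E -> 0 < e ->
  exists d, 0 < d /\
   forall y l, `|y - x0| < d -> 0 < l < d -> Q v y l <= c + e.
Proof.
move=> hc e0.
have : (clarke_dd j x0 v < (c + e)%:E)%E by rewrite hc lte_fin ltrDl.
rewrite /clarke_dd => /ereal_inf_lt [_ [d /= d0 <-] hlt].
exists d; split => // y l hy hl.
rewrite -lee_fin; apply: le_trans (ltW hlt).
by apply: ereal_sup_ubound; exists (y, l).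
Qed.

Lemma cdd_lo v (a : R) :
  (forall d, 0 < d -> exists y l, `|y - x0| < d /\ 0 < l < d /\ a <= Q v y l) ->
  (a%:E <= clarke_dd j x0 v)%E.
Proof.
move=> H; apply: le_ereal_inf_tmp => _ [d /= d0 <-].
have [y [l [hy [hl ha]]]] := H d d0.
apply: le_ereal_sup_tmp; exists (Q v y l)%:E; last by rewrite lee_fin.
by exists (y, l).
Qed.


Variables (r L0 : R).
Hypothesis r0 : 0 < r.
Hypothesis hL : forall y z, `|y - x0| < r -> `|z - x0| < r ->
  `|j y - j z| <= L0 * `|y - z|.

Let Lp := `|L0|.

Lemma Q_bound v y l : `|y - x0| < r / (1 + `|v|) -> 0 < l < r / (1 + `|v|) ->
  `|Q v y l| <= Lp * `|v|.
Proof.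
move=> hy /andP[l0 hl].
have v0 := normr_ge0 v.
have hprod : r / (1 + `|v|) * (1 + `|v|) = r by rewrite mulfVK //; apply/negP=> /eqP; lra.
move: hy hl hprod; set dd := r / (1 + `|v|) => hy hl hprod.
have h1 : `|y - x0| < r by nra.
have h2 : `|y + l *: v - x0| < r.
  have -> : y + l *: v - x0 = (y - x0) + l *: v by rewrite addrAC.
  apply: le_lt_trans (ler_normD _ _) _.
  rewrite normrZ gtr0_norm //.
  have : l * `|v| <= dd * `|v| by rewrite ler_wpM2r // ltW.
  nra.
have := hL _ _ h2 h1.
have -> : y + l *: v - y = l *: v by rewrite addrAC subrr add0r.
rewrite normrZ gtr0_norm // => hj.
rewrite /Q normrM normfV (gtr0_norm l0) ler_pdivrMr //.
apply: le_trans hj _.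
have := ler_norm L0; rewrite -/Lp => hL0.
have : 0 <= l * `|v| by apply: mulr_ge0; [exact: ltW|].
nra.
Qed.

Lemma cdd_bounds v :
  ((- (Lp * `|v|))%:E <= clarke_dd j x0 v)%E /\ (clarke_dd j x0 v <= (Lp * `|v|)%:E)%E.
Proof.
have v0 := normr_ge0 v.
have dd0 : 0 < r / (1 + `|v|) by rewrite divr_gt0 //; lra.
split.
  apply: cdd_lo => d d0.
  exists x0, (Num.min d (r / (1 + `|v|)) / 2).
  have m0 : 0 < Num.min d (r / (1 + `|v|)) by rewrite lt_min d0 dd0.
  have hl0 : 0 < Num.min d (r / (1 + `|v|)) / 2 by rewrite divr_gt0.
  have hlm : Num.min d (r / (1 + `|v|)) / 2 < Num.min d (r / (1 + `|v|)).
    by rewrite ltr_pdivrMr // ltr_pMr // ltr1n.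
  rewrite subrr normr0; split => //; split.
    by rewrite hl0 /=; apply: lt_le_trans hlm _; rewrite ge_min lexx.
  have := @Q_bound v x0 (Num.min d (r / (1 + `|v|)) / 2).
  rewrite subrr normr0 dd0 hl0 /= => /(_ isT).
  move=> H; have /H : Num.min d (r / (1 + `|v|)) / 2 < r / (1 + `|v|).
    by apply: lt_le_trans hlm _; rewrite ge_min lexx orbT.
  by rewrite ler_norml => /andP[].
apply: (@cdd_up v (r / (1 + `|v|)) (r / (1 + `|v|))) => // y l hy hl.
by have := Q_bound _ _ _ hy hl; rewrite ler_norml => /andP[].
Qed.

Definition hr v := fine (clarke_dd j x0 v).

Lemma cdd_fin v : clarke_dd j x0 v = (hr v)%:E.
Proof.
have [] := cdd_bounds v; rewrite /hr.
by case: (clarke_dd j x0 v).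
Qed.

Lemma hr_bounds v : - (Lp * `|v|) <= hr v <= Lp * `|v|.
Proof. by have [] := cdd_bounds v; rewrite cdd_fin !lee_fin => -> ->. Qed.

Lemma hr_hom c v : 0 < c -> hr (c *: v) <= c * hr v.
Proof.
move=> c0; apply/ler_addgt0Pr => e e0.
have [d [d0 Hd]] := cdd_approx _ _ _ (cdd_fin v) (divr_gt0 e0 c0).
have key : (clarke_dd j x0 (c *: v) <= (c * (hr v + e / c))%:E)%E.
  apply: (@cdd_up (c *: v) d (d / c) (c * (hr v + e / c)) d0 (divr_gt0 d0 c0)).
  move=> y l hy /andP[l0 hl]; rewrite /Q.
  have -> : (j (y + l *: (c *: v)) - j y) / l = c * ((j (y + (c * l) *: v) - j y) / (c * l)).
    rewrite scalerA (mulrC l c); field; apply/andP; split; rewrite gt_eqF //.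
  rewrite ler_pM2l //; apply: Hd => //.
  by rewrite mulr_gt0 //= mulrC -ltr_pdivlMr.
move: key; rewrite cdd_fin lee_fin.
have -> : c * (hr v + e / c) = c * hr v + e.
  by rewrite mulrDr mulrCA mulfV ?mulr1 // gt_eqF.
by [].
Qed.

Lemma hr_sub v1 v2 : hr (v1 + v2) <= hr v1 + hr v2.
Proof.
apply/ler_addgt0Pr => e e0.
have e20 : 0 < e / 2 by rewrite divr_gt0.
have [d1 [d10 H1]] := cdd_approx _ _ _ (cdd_fin v1) e20.
have [d2 [d20 H2]] := cdd_approx _ _ _ (cdd_fin v2) e20.
have n0 := normr_ge0 v1.
have q0 : 0 < d2 / (1 + `|v1|) by rewrite divr_gt0 //; lra.
have hq : d2 / (1 + `|v1|) * (1 + `|v1|) = d2.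
  by rewrite mulfVK //; apply/negP => /eqP; lra.
move: q0 hq; set q := d2 / (1 + `|v1|) => q0 hq.
pose del := Num.min d1 q.
have del0 : 0 < del by rewrite lt_min d10 q0.
have del1 : del <= d1 by rewrite ge_min lexx.
have del2 : del <= q by rewrite ge_min lexx orbT.
suff key : (clarke_dd j x0 (v1 + v2)%R <= (hr v1 + e / 2 + (hr v2 + e / 2))%:E)%E.
  move: key; rewrite cdd_fin lee_fin.
  have -> : hr v1 + e / 2 + (hr v2 + e / 2) = hr v1 + hr v2 + e.
    by rewrite [e in RHS](splitr e); ring.
  by [].
apply: (@cdd_up (v1 + v2) del del (hr v1 + e / 2 + (hr v2 + e / 2)) del0 del0).
move=> y l hy /andP[l0 hl]; rewrite /Q.
have -> : (j (y + l *: (v1 + v2)) - j y) / l =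
   (j (y + l *: v1) - j y) / l + (j ((y + l *: v1) + l *: v2) - j (y + l *: v1)) / l.
  by rewrite scalerDr addrA -mulrDl; congr (_ / _); ring.
apply: lerD.
  apply: H1; first by apply: lt_le_trans del1.
  by rewrite l0 /=; apply: lt_le_trans del1.
apply: H2; last first.
  by rewrite l0 /=; nra.
have -> : y + l *: v1 - x0 = (y - x0) + l *: v1 by rewrite addrAC.
apply: le_lt_trans (ler_normD _ _) _.
rewrite normrZ gtr0_norm //.
have : l * `|v1| <= del * `|v1| by rewrite ler_wpM2r // ltW.
nra.
Qed.

End Clarke.

Section Lin.
Variables (R : realType) (V W : normedModType R) (M : V -> W).
Hypothesis hM : forall (a : R) x y, M (a *: x + y) = a *: M x + M y.
Lemma lin0 : M 0 = 0.
Proof. have := hM 1 0 0; rewrite !scale1r addr0 => h. by apply: (addrI (M 0)); rewrite addr0 -h. Qed.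
Lemma linZ a x : M (a *: x) = a *: M x.
Proof. by have := hM a x 0; rewrite addr0 lin0 addr0. Qed.
Lemma linD x y : M (x + y) = M x + M y.
Proof. by have := hM 1 x y; rewrite !scale1r. Qed.
Lemma linN x : M (- x) = - M x.
Proof. by rewrite -scaleN1r linZ scaleN1r. Qed.
Lemma linB x y : M (x - y) = M x - M y.
Proof. by rewrite linD linN. Qed.
End Lin.

Section LinF.
Variables (R : realType) (V : normedModType R) (g : V -> R).
Hypothesis hg : forall (a : R) x y, g (a *: x + y) = a * g x + g y.
Lemma flin0 : g 0 = 0.
Proof. have := hg 1 0 0; rewrite scale1r addr0 mul1r; lra. Qed.
Lemma flinZ a x : g (a *: x) = a * g x.
Proof. by have := hg a x 0; rewrite addr0 flin0 addr0. Qed.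
Lemma flinD x y : g (x + y) = g x + g y.
Proof. by have := hg 1 x y; rewrite scale1r mul1r. Qed.
End LinF.

Local Open Scope convex_scope.

Theorem mainTheorem4 (R : realType)
  (V : completeNormedModType R) (hV : reflexive_space V)
  (X : completeNormedModType R) (inner : X -> X -> R)
  (hX : hilbert_inner inner)
  (C : set V) (K : V -> set V)
  (hK : forall u, C u ->
     [/\ K u `<=` C, K u !=set0, closed (K u) & convex_set (K u)])
  (A : V -> V -> R) (hA : forall u, is_dual (A u))
  (f : V -> R) (hf : is_dual f)
  (phi : V -> R) (hphi : convex_function setT phi)
  (M : V -> X) (hM : bounded_linear M)
  (j : X -> R) (hj : locally_lipschitz j)
  (u : V) :
  (C u /\ K u u /\
   forall z, K u z ->
     ((A u (z - u) - f (z - u) + phi z - phi u)%:E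
        + clarke_dd j (M u) (M z - M u)%R >= 0)%E)
  <->
  (C u /\ K u u /\
   exists w : X, clarke_subdiff inner j (M u) w /\
     forall z, K u z ->
       A u (z - u) - f (z - u) + phi z - phi u
         + adjoint inner M w (z - u) >= 0).
Proof.
have MB x y : M (x - y) = M x - M y by apply: linB; case: hM.
split; last first.
  move=> [Cu [Kuu [w [hw hz]]]]; split => //; split => // z Kz.
  have := hz z Kz; rewrite /adjoint MB => h.
  apply: le_trans (leeD2l _ (hw (M z - M u))).
  by rewrite -EFinD lee_fin.
move=> [Cu [Kuu H]]; split => //; split => //.
have [hMl _] := hM.
have MZ a x : M (a *: x) = a *: M x by apply: linZ.
have MD x y : M (x + y) = M x + M y by apply: linD.
have [hAl _] := hA u; have [hfl _] := hf.
pose F z := A u (z - u) - f (z - u) + phi z - phi u.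
have [r [L0 [r0 hL]]] := hj (M u).
pose h := @hr _ _ j (M u).
have hfin v : clarke_dd j (M u) v = (h v)%:E := @cdd_fin _ _ j (M u) r L0 r0 hL v.
have hbd v : - (`|L0| * `|v|) <= h v <= `|L0| * `|v| := @hr_bounds _ _ j (M u) r L0 r0 hL v.
have hsub v1 v2 : h (v1 + v2) <= h v1 + h v2 := @hr_sub _ _ j (M u) r L0 r0 hL v1 v2.
have hhom c v : 0 < c -> h (c *: v) <= c * h v := @hr_hom _ _ j (M u) r L0 r0 hL c v.
have h0 : h 0 = 0.
  by have := hbd 0; rewrite normr0 mulr0 oppr0 => /andP[a b]; apply/le_anti; rewrite a b.
have Hh z : K u z -> 0 <= F z + h (M (z - u)).
  move=> Kz; have := H z Kz; rewrite -MB hfin -EFinD lee_fin.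
  by rewrite /F.
have hscal t v : 0 <= t -> t * h v <= h (t *: v).
  rewrite le0r => /orP[/eqP-> | t0]; first by rewrite mul0r scale0r h0.
  have := hhom t^-1 (t *: v) ltac:(by rewrite invr_gt0).
  rewrite scalerA mulVf ?gt_eqF // scale1r => hh.
  by rewrite -ler_pdivlMl // mulrC.
pose E x := [set h (x + tz.1 *: M (tz.2 - u)) + tz.1 * F tz.2
            | tz in [set tz : R * V | 0 <= tz.1 /\ K u tz.2]].
pose p x := inf (E x).
have Elb x e : E x e -> - h (- x) <= e.
  move=> [[t z] /= [t0 Kz] <-].
  have h1 := hsub (x + t *: M (z - u)) (- x).
  rewrite addrAC subrr add0r in h1.
  have h2 := hscal t (M (z - u)) t0.
  have h3 := Hh z Kz.
  have : 0 <= t * (F z + h (M (z - u))) by rewrite mulr_ge0.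
  lra.
have Ene x : E x !=set0.
  exists (h x); exists (0, u); first by split.
  by rewrite /= scale0r addr0 mul0r addr0.
have Ehas x : has_lbound (E x) by exists (- h (- x)) => e /Elb.
have p_le x e : E x e -> p x <= e by move=> He; apply: ge_inf.
have p_ge x a : (forall e, E x e -> a <= e) -> a <= p x.
  by move=> Ha; apply: lb_le_inf.
have pup x : p x <= h x.
  apply: (p_le); exists (0, u); first by split.
  by rewrite /= scale0r addr0 mul0r addr0.
have plo x : - h (- x) <= p x by apply: (p_ge) => e /Elb.
have phom c x : 0 < c -> p (c *: x) <= c * p x.
  move=> c0; rewrite mulrC -ler_pdivrMr //.
  apply: (p_ge) => _ [[t z] /= [t0 Kz] <-].
  rewrite ler_pdivrMr // mulrC.
  apply: le_trans (p_le (c *: x) (h (c *: x + (c * t) *: M (z - u)) + (c * t) * F z) _) _.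
    by exists (c * t, z) => //; split => //; rewrite mulr_ge0 // ltW.
  rewrite -scalerA -scalerDr -mulrA; have := hhom c (x + t *: M (z - u)) c0; nra.
have psub x1 x2 : p (x1 + x2) <= p x1 + p x2.
  suff key : forall e1 e2, E x1 e1 -> E x2 e2 -> p (x1 + x2) <= e1 + e2.
    rewrite -lerBlDr; apply: (p_ge) => e1 He1.
    rewrite lerBlDr -lerBlDl; apply: (p_ge) => e2 He2.
    have := key e1 e2 He1 He2; lra.
  move=> _ _ [[t1 z1] /= [t10 Kz1] <-] [[t2 z2] /= [t20 Kz2] <-].
  have [tz|tpos] := eqVneq (t1 + t2) 0.
    have e1 : t1 = 0 by lra.
    have e2 : t2 = 0 by lra.
    rewrite e1 e2 !scale0r !addr0 !mul0r !addr0.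
    exact: le_trans (pup _) (hsub _ _).
  have t0 : 0 < t1 + t2 by rewrite lt_def tpos addr_ge0.
  move: tpos t0; set t := t1 + t2 => tpos t0.
  pose lam := t1 / t.
  have tl1 : t * lam = t1 by rewrite /lam mulrC divfK.
  have tl2 : t * (1 - lam) = t2 by rewrite mulrBr mulr1 tl1 /t; lra.
  have lam0 : 0 <= lam by rewrite /lam divr_ge0 // ltW.
  have lam1 : lam <= 1.
    rewrite /lam ler_pdivrMr // mul1r /t; lra.
  clearbody lam.
  pose z := lam *: z1 + (1 - lam) *: z2.
  have Kz : K u z.
    have [_ _ _ cK] := hK u Cu.
    exact: set_mem (cK z1 z2 (Itv01 lam0 lam1) (mem_set Kz1) (mem_set Kz2)).
  have W : t *: (z - u) = t1 *: (z1 - u) + t2 *: (z2 - u).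
    rewrite scalerBr /z scalerDr !scalerA tl1 tl2.
    have -> : t *: u = t1 *: u + t2 *: u by rewrite /t scalerDl.
    by rewrite !scalerBr opprD addrACA.
  have hphiz : t * phi z <= t1 * phi z1 + t2 * phi z2.
    have := hphi (Itv01 lam0 lam1) z1 z2; rewrite !in_setT => /(_ isT isT) /= hc.
    have : t * phi z <= t * (lam * phi z1 + (1 - lam) * phi z2).
      by rewrite ler_pM2l.
    by rewrite mulrDr !mulrA tl1 tl2.
  have gA : t * A u (z - u) = t1 * A u (z1 - u) + t2 * A u (z2 - u).
    by rewrite -(@flinZ _ _ (A u) hAl) W hAl (@flinZ _ _ (A u) hAl).
  have gf : t * f (z - u) = t1 * f (z1 - u) + t2 * f (z2 - u).
    by rewrite -(@flinZ _ _ f hfl) W hfl (@flinZ _ _ f hfl).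
  have hFz : t * F z <= t1 * F z1 + t2 * F z2.
    rewrite /F !mulrDr !mulrN gA gf.
    have hu : t * phi u = t1 * phi u + t2 * phi u by rewrite /t mulrDl.
    rewrite hu; lra.
  apply: le_trans (p_le _ (h (x1 + x2 + t *: M (z - u)) + t * F z) _) _.
    by exists (t, z) => //; split => //; exact: ltW.
  have : h (x1 + x2 + t *: M (z - u)) <= h (x1 + t1 *: M (z1 - u)) + h (x2 + t2 *: M (z2 - u)).
    rewrite -MZ W (MD (t1 *: (z1 - u))) !MZ addrACA; exact: hsub.
  lra.
have pup' x : p x <= `|L0| * `|x|.
  by apply: le_trans (pup x) _; have /andP[] := hbd x.
have plo' x : - (`|L0| * `|x|) <= p x.
  apply: le_trans (plo x); rewrite lerN2.
  by have /andP[_] := hbd (- x); rewrite normrN.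
have [g hg] := @subgrad_exists R X inner hX p `|L0| psub phom pup' plo'.
exists g; split.
  move=> v; rewrite hfin lee_fin; exact: le_trans (hg v) (pup v).
move=> z Kz; rewrite /adjoint.
have := hg (- M (z - u)); rewrite (@innerNr _ _ inner hX) => hneg.
have : p (- M (z - u)) <= F z.
  apply: (p_le); exists (1, z); first by split => //; exact: ler01.
  by rewrite /= scale1r addNr h0 add0r mul1r.
rewrite /F; lra.
Qed.
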